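(* In the setting described in the context, for every $y\in\mathbb R^p$ and $n\ge1$, $$\widetilde a_{n+1}(y)+2\tau_n\widetilde J(x_n,w_n,y)\le\widetilde a_n(y)-b_n,$$ where $\widetilde J(x,w,y)=F(x,w)+\langle y,H(x)-w\rangle-F(x^\star,w^\star)$, $\widetilde a_n(y)=\frac{\psi}{\psi-1}\|z_{n+1}-x^\star\|^2+\frac1\beta\|y_{n-1}-y\|^2+\omega\delta_{n-1}\|x_n-x_{n-1}\|^2$, and $b_n=-\frac{\tau_n\tau_{n-1}}{\xi}\|\theta_n\|^2+\frac1\beta\|y_n-y_{n-1}\|^2+\omega\delta_{n-1}\|x_n-x_{n-1}\|^2-2\tau_n\Phi_n^y$.
   Context: Let $f:\mathbb{R}^p\to(-\infty,+\infty]$ and $g:\mathbb{R}^q\to(-\infty,+\infty]$ be proper closed convex functions; $f^*$ is the Fenchel conjugate, $\mathrm{dom}$ the effective domain, $\mathrm{Prox}_{\lambda h}(x)=\arg\min_u\{h(u)+\frac{1}{2\lambda}\|u-x\|^2\}$. Let $h:\mathbb R^q\to\mathbb R$ be convex with $L_h$-Lipschitz gradient, and $H:\mathrm{dom}(g)\to\mathrm{dom}(f)$ continuously differentiable with Jacobian $H'$, such that $x\mapsto\langle H(x),y\rangle$ is convex for every $y\in\mathrm{dom}(f^* )$. Set $\Phi(x,y)=h(x)+\langle H(x),y\rangle$ and $\mathcal L(x,y)=g(x)+\Phi(x,y)-f^*(y)$. Assume: (A1) the set of saddle points $\{(x^\star,y^\star)\in\mathrm{dom}(g)\times\mathrm{dom}(f^*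 ):-\nabla_x\Phi(x^\star,y^\star)\in\partial g(x^\star),\ \nabla_y\Phi(x^\star,y^\star)\in\partial f^*(y^\star)\}$ is nonempty, $\mathrm{dom}(g)\times\mathrm{dom}(f^* )\subseteq\mathrm{dom}(\Phi)$, $\mathcal L(x^\star,y^\star)$ finite; (A2) $\Phi(\cdot,y)$ convex differentiable, $\Phi(x,\cdot)$ concave differentiable, and on every pair of bounded sets $\mathcal X,\mathcal Y$ there are $L_{yy},L_{xx}\ge0,L_{xy}>0$ with $\|\nabla_y\Phi(x,y)-\nabla_y\Phi(x,\tilde y)\|\le L_{yy}\|y-\tilde y\|$, $\|\nabla_x\Phi(x,y)-\nabla_x\Phi(\tilde x,\tilde y)\|\le L_{xx}\|x-\tilde x\|+L_{xy}\|y-\tilde y\|$ on $(\mathcal X\cap\mathrm{dom}(g))\times(\mathcal Y\cap\mathrm{dom}(f^* ))$. Let $F(x,w)=g(x)+h(x)+f(w)$, and let $(x^\star,w^\star,y^\star)$ be a fixed point of $\widetilde\Omega=\{(x,w,y)\in\mathrm{dom}(g)\times\mathrm{dom}(f)\times\mathrm{dom}(f^* ): -H'(x)^\top y-\nabla h(x)\in\partial g(x),\ y\in\partial f(w),\ H(x)=w\}$. Algorithm PDAc-L (applied to this $\Phi$): choose $\psi\in(1,1+\sqrt3)$, $\xi>0$, $\varphi>1$ with $\omega:=2\psi-\xi-\frac{\psi^3\varphi}{1+\psi}>0$, $\tau_{\max}>0$, $\nu,\mu\in(0,1)$, $\eta\in[0,1)$, integer $M\ge1$, $\beta>0$, $x_0\in\mathrm{dom}(g)$,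 $y_0\in\mathrm{dom}(f^* )$, $\tau_0\in(0,\tau_{\max}]$; $z_0=x_0$, $\delta_0=1$. For $n\ge1$: $z_n=\frac{\psi-1}{\psi}x_{n-1}+\frac1\psi z_{n-1}$, $x_n=\mathrm{Prox}_{\tau_{n-1}g}(z_n-\tau_{n-1}\nabla_x\Phi(x_{n-1},y_{n-1}))$; with $\tau=\min\{\varphi\tau_{n-1},\tau_{\max}\}$, set $\tau_n=\tau\mu^i$, $y_n=\mathrm{Prox}_{\beta\tau_nf^*}(y_{n-1}+\beta\tau_nH(x_n))$, where $i\ge0$ is the smallest integer with $\frac{\tau_n\tau_{n-1}}{\xi}\|\theta_n\|^2+2\tau_n\Phi_n^y\le\nu r_n+(1-\nu)c_n$, $\theta_n=\nabla_x\Phi(x_n,y_n)-\nabla_x\Phi(x_{n-1},y_{n-1})$, $\Phi_n^y=\Phi(x_n,y_{n-1})+\langle\nabla_y\Phi(x_n,y_{n-1}),y_n-y_{n-1}\rangle-\Phi(x_n,y_n)$ (here $=0$), $r_n=\omega\delta_{n-1}\|x_n-x_{n-1}\|^2+\frac1\beta\|y_n-y_{n-1}\|^2$, $c_n=\frac{\eta}{|\mathcal I_n|}\sum_{i\in\mathcal I_n}r_i$, $\mathcal I_n=\{n-1,\dots,\max\{n-M,1\}\}$ ($c_1:=0$); $\delta_n=\tau_n/\tau_{n-1}$. Define $w_n=\mathrm{Prox}_{f/(\beta\tau_n)}(y_{n-1}/(\beta\tau_n)+H(x_n))$, so that $y_n=y_{n-1}+\beta\tau_n(H(x_n)-w_n)$.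 *)

(* Defs.v *)
From HB Require Import structures.
From mathcomp Require Import all_boot all_order all_algebra.
From mathcomp Require Import all_classical all_reals all_analysis.
Import Order.TTheory GRing.Theory Num.Theory.
Import numFieldNormedType.Exports.

Set Implicit Arguments.
Unset Strict Implicit.
Unset Printing Implicit Defensive.

Local Open Scope ring_scope.
Local Open Scope classical_set_scope.

Definition dot (R : realType) (n : nat) (u v : 'rV[R]_n) : R :=
  \sum_(i < n) u 0 i * v 0 i.
Definition sqn (R : realType) (n : nat) (u : 'rV[R]_n) : R := dot u u.
Definition enorm (R : realType) (n : nat) (u : 'rV[R]_n) : R := Num.sqrt (sqn u).
Definition ebounded (R : realType) (n : nat) (A : set 'rV[R]_n) : Prop :=
  exists r : R, forall u, A u -> enorm u <= r.

Definition edom (R : realType) (n : nat) (f : 'rV[R]_n -> \bar R) : set 'rV[R]_n :=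
  [set u | (f u < +oo)%E].
Definition proper_fun (R : realType) (n : nat) (f : 'rV[R]_n -> \bar R) : Prop :=
  (forall u, f u <> -oo%E) /\ (exists u, (f u < +oo)%E).
(* closed = lower semicontinuous = all sublevel sets closed *)
Definition closed_fun (R : realType) (n : nat) (f : 'rV[R]_n -> \bar R) : Prop :=
  forall a : R, closed [set u | (f u <= a%:E)%E].
Definition convex_fun (R : realType) (n : nat) (f : 'rV[R]_n -> \bar R) : Prop :=
  forall (u v : 'rV[R]_n) (t : R), 0 < t < 1 ->
    (f (t *: u + (1 - t) *: v)%R <= t%:E * f u + ((1 - t)%R)%:E * f v)%E.
Definition convex_rfun (R : realType) (n : nat) (f : 'rV[R]_n -> R) : Prop :=
  forall (u v : 'rV[R]_n) (t : R), 0 <= t <= 1 ->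
    f (t *: u + (1 - t) *: v) <= t * f u + (1 - t) * f v.
Definition concave_rfun (R : realType) (n : nat) (f : 'rV[R]_n -> R) : Prop :=
  convex_rfun (fun u => - f u).
Definition fconj (R : realType) (n : nat) (f : 'rV[R]_n -> \bar R) (v : 'rV[R]_n) : \bar R :=
  ereal_sup [set ((dot u v)%:E - f u)%E | u in [set: 'rV[R]_n]].
Definition subdiff (R : realType) (n : nat) (f : 'rV[R]_n -> \bar R) (u v : 'rV[R]_n) : Prop :=
  forall u', (f u + (dot v (u' - u))%:E <= f u')%E.
(* is_prox lam f u p  <->  p = Prox_{lam f}(u) = argmin_v f(v) + ||v-u||^2/(2 lam) *)
Definition is_prox (R : realType) (n : nat) (lam : R) (f : 'rV[R]_n -> \bar R) (u pu : 'rV[R]_n) : Prop :=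
  forall v, (f pu + (sqn (pu - u) / (2 * lam))%:E <= f v + (sqn (v - u) / (2 * lam))%:E)%E.

Definition Phi (R : realType) (p q : nat) (h : 'rV[R]_q -> R) (H : 'rV[R]_q -> 'rV[R]_p)
  (x : 'rV[R]_q) (y : 'rV[R]_p) : R := h x + dot (H x) y.
(* grad_x Phi(x,y) = grad h(x) + H'(x)^T y  (row-vector convention: y *m H'(x)) *)
Definition gradxPhi (R : realType) (p q : nat) (gradh : 'rV[R]_q -> 'rV[R]_q)
  (Hj : 'rV[R]_q -> 'M[R]_(p, q)) (x : 'rV[R]_q) (y : 'rV[R]_p) : 'rV[R]_q :=
  gradh x + y *m Hj x.
Definition gradyPhi (R : realType) (p q : nat) (H : 'rV[R]_q -> 'rV[R]_p)
  (x : 'rV[R]_q) (y : 'rV[R]_p) : 'rV[R]_p := H x.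
(* Phi^y_n with x = x_n, yo = y_{n-1}, yn = y_n *)
Definition Phiy (R : realType) (p q : nat) (h : 'rV[R]_q -> R) (H : 'rV[R]_q -> 'rV[R]_p)
  (x : 'rV[R]_q) (yo yn : 'rV[R]_p) : R :=
  Phi h H x yo + dot (gradyPhi H x yo) (yn - yo) - Phi h H x yn.

Definition omega (R : realType) (psi xi phi : R) : R :=
  2 * psi - xi - psi ^+ 3 * phi / (1 + psi).
Definition delta (R : realType) (tau : nat -> R) (n : nat) : R :=
  if n is n'.+1 then tau n'.+1 / tau n' else 1.
Definition rseq (R : realType) (p q : nat) (om beta : R) (tau : nat -> R)
  (x : nat -> 'rV[R]_q) (y : nat -> 'rV[R]_p) (n : nat) : R :=
  om * delta tau n.-1 * sqn (x n - x n.-1) + beta^-1 * sqn (y n - y n.-1).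
(* c_1 = 0; c_n = eta/|I_n| sum_{i in I_n} r_i, I_n = {max(n-M,1),...,n-1},
   |I_n| = min(M, n-1) *)
Definition cseq (R : realType) (p q : nat) (om beta eta : R) (M : nat) (tau : nat -> R)
  (x : nat -> 'rV[R]_q) (y : nat -> 'rV[R]_p) (n : nat) : R :=
  if (n <= 1)%N then 0
  else eta / (minn M n.-1)%:R * \sum_(maxn (n - M) 1 <= i < n) rseq om beta tau x y i.
(* line-search test at step n for a trial step size t and trial dual point yc
   (yc plays the role of y_n, t of tau_n) *)
Definition ls_cond (R : realType) (p q : nat) (h : 'rV[R]_q -> R) (gradh : 'rV[R]_q -> 'rV[R]_q)
  (H : 'rV[R]_q -> 'rV[R]_p) (Hj : 'rV[R]_q -> 'M[R]_(p, q))
  (om xi nu beta eta : R) (M : nat) (tau : nat -> R)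
  (x : nat -> 'rV[R]_q) (y : nat -> 'rV[R]_p) (n : nat) (t : R) (yc : 'rV[R]_p) : Prop :=
  t * tau n.-1 / xi * sqn (gradxPhi gradh Hj (x n) yc - gradxPhi gradh Hj (x n.-1) (y n.-1))
    + 2 * t * Phiy h H (x n) (y n.-1) yc
  <= nu * (om * delta tau n.-1 * sqn (x n - x n.-1) + beta^-1 * sqn (yc - y n.-1))
     + (1 - nu) * cseq om beta eta M tau x y n.

Definition Fobj (R : realType) (p q : nat) (f : 'rV[R]_p -> \bar R) (g : 'rV[R]_q -> \bar R)
  (h : 'rV[R]_q -> R) (x : 'rV[R]_q) (w : 'rV[R]_p) : \bar R :=
  (g x + (h x)%:E + f w)%E.
Definition Jtil (R : realType) (p q : nat) (f : 'rV[R]_p -> \bar R) (g : 'rV[R]_q -> \bar R)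
  (h : 'rV[R]_q -> R) (H : 'rV[R]_q -> 'rV[R]_p) (xs : 'rV[R]_q) (ws : 'rV[R]_p)
  (x : 'rV[R]_q) (w y : 'rV[R]_p) : \bar R :=
  (Fobj f g h x w + (dot y (H x - w))%:E - Fobj f g h xs ws)%E.
Definition atil (R : realType) (p q : nat) (psi om beta : R) (tau : nat -> R)
  (x z : nat -> 'rV[R]_q) (y : nat -> 'rV[R]_p) (xs : 'rV[R]_q) (n : nat) (yv : 'rV[R]_p) : R :=
  psi / (psi - 1) * sqn (z n.+1 - xs) + beta^-1 * sqn (y n.-1 - yv)
  + om * delta tau n.-1 * sqn (x n - x n.-1).
Definition bn_seq (R : realType) (p q : nat) (h : 'rV[R]_q -> R) (gradh : 'rV[R]_q -> 'rV[R]_q)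
  (H : 'rV[R]_q -> 'rV[R]_p) (Hj : 'rV[R]_q -> 'M[R]_(p, q))
  (om xi beta : R) (tau : nat -> R)
  (x : nat -> 'rV[R]_q) (y : nat -> 'rV[R]_p) (n : nat) : R :=
  - (tau n * tau n.-1 / xi
       * sqn (gradxPhi gradh Hj (x n) (y n) - gradxPhi gradh Hj (x n.-1) (y n.-1)))
  + beta^-1 * sqn (y n - y n.-1) + om * delta tau n.-1 * sqn (x n - x n.-1)
  - 2 * tau n * Phiy h H (x n) (y n.-1) (y n).

(* Main.v *)
Require Import Defs.
From HB Require Import structures.
From mathcomp Require Import all_boot all_order all_algebra.
From mathcomp Require Import all_classical all_reals all_analysis.
From mathcomp Require Import ring lra.
Import Order.TTheory GRing.Theory Num.Theory.
Import numFieldNormedType.Exports.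
Local Open Scope ring_scope.
Local Open Scope classical_set_scope.

Lemma coordid (R : realFieldType) (x1 x0 zp s n1 n0 ps D tp xi ph : R) :
  ps != 0 -> ps - 1 != 0 -> 1 + ps != 0 -> ph != 0 -> xi != 0 -> tp != 0 ->
  let tau := D * tp in let m := ps ^+ 3 * ph / (1 + ps) in let k := ps - m in
  let om := 2 * ps - xi - m in
  let z := (ps - 1) / ps * x0 + ps^-1 * zp in
  let z2 := (ps - 1) / ps * x1 + ps^-1 * z in
  let A := x1 - z in let B := x0 - z in
  ps / (ps - 1) * (z - s) ^+ 2 + tau * tp / xi * (n1 - n0) ^+ 2
  - (2 * ((x1 - z + tau * n1) * (s - x1)) + 2 * D * ((x0 - zp + tp * n0) * (x1 - x0))
     - 2 * tau * (n1 * (s - x0)) + ps / (ps - 1) * (z2 - s) ^+ 2 + om * D * (x1 - x0) ^+ 2)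
  = D / m * (m * B + k * A) ^+ 2 + (1 + ps) / ps * (1 - D / ph) * A ^+ 2
    + tau / (xi * tp) * (tp * (n1 - n0) - xi * (x0 - x1)) ^+ 2.
Proof.
move=> ? ? ? ? ? ? tau m k om z z2 A B.
rewrite /A /B /k /om /z2 /z /m /tau. field.
by apply/and5P; split => //; apply/andP.
Qed.

Lemma coordineq (R : realType) (x1 x0 zp z z2 s n1 n0 ps D tp xi ph : R) :
  1 < ps -> 0 < D -> D <= ph -> 0 < xi -> 0 < tp ->
  z = (ps - 1) / ps * x0 + ps^-1 * zp ->
  z2 = (ps - 1) / ps * x1 + ps^-1 * z ->
  2 * ((x1 - z + D * tp * n1) * (s - x1)) + 2 * D * ((x0 - zp + tp * n0) * (x1 - x0))
     - 2 * (D * tp) * (n1 * (s - x0)) + ps / (ps - 1) * (z2 - s) ^+ 2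
     + omega ps xi ph * D * (x1 - x0) ^+ 2
  <= ps / (ps - 1) * (z - s) ^+ 2 + D * tp * tp / xi * (n1 - n0) ^+ 2.
Proof.
move=> ps1 D0 Dph xi0 tp0 hz hz2.
have ps0 : 0 < ps by lra.
have ph0 : 0 < ph by lra.
have n1' : ps != 0 by rewrite gt_eqF.
have n2 : ps - 1 != 0 by rewrite gt_eqF // subr_gt0.
have n3 : 1 + ps != 0 by rewrite gt_eqF // addr_gt0.
have n4 : ph != 0 by rewrite gt_eqF.
have n5 : xi != 0 by rewrite gt_eqF.
have n6 : tp != 0 by rewrite gt_eqF.
have := @coordid R x1 x0 zp s n1 n0 ps D tp xi ph n1' n2 n3 n4 n5 n6.
rewrite /omega -hz -hz2 => E.
rewrite -subr_ge0 E.
have m0 : 0 < ps ^+ 3 * ph / (1 + ps) by rewrite divr_gt0 ?mulr_gt0 ?exprn_gt0 ?addr_gt0.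
apply: addr_ge0; [apply: addr_ge0|].
+ by apply: mulr_ge0; [apply: divr_ge0; lra| apply: sqr_ge0].
+ apply: mulr_ge0; [apply: mulr_ge0|apply: sqr_ge0].
    by apply: divr_ge0; lra.
  by rewrite subr_ge0 ler_pdivrMr // mul1r.
+ by apply: mulr_ge0; [apply: divr_ge0; rewrite ?mulr_ge0 //; lra| apply: sqr_ge0].
Qed.
Lemma xineq (R : realType) q (X1 X0 Zp Z Z2 S N1 N0 : 'rV[R]_q) (ps D tp xi ph : R) :
  1 < ps -> 0 < D -> D <= ph -> 0 < xi -> 0 < tp ->
  Z = ((ps - 1) / ps) *: X0 + ps^-1 *: Zp ->
  Z2 = ((ps - 1) / ps) *: X1 + ps^-1 *: Z ->
  2 * dot (X1 - Z + (D * tp) *: N1) (S - X1) + 2 * D * dot (X0 - Zp + tp *: N0) (X1 - X0)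
     - 2 * (D * tp) * dot N1 (S - X0) + ps / (ps - 1) * sqn (Z2 - S)
     + omega ps xi ph * D * sqn (X1 - X0)
  <= ps / (ps - 1) * sqn (Z - S) + D * tp * tp / xi * sqn (N1 - N0).
Proof.
move=> ps1 D0 Dph xi0 tp0 hZ hZ2.
rewrite /sqn /dot !mulr_sumr -!sumrN -!big_split /=.
apply: ler_sum => i _.
rewrite !mxE.
rewrite -!expr2.
apply: (@coordineq R _ _ (Zp 0 i)) => //.
- by rewrite hZ !mxE.
- by rewrite hZ2 !mxE.
Qed.
Lemma dotZl (R : realType) n (a : R) (u v : 'rV[R]_n) : dot (a *: u) v = a * dot u v.
Proof. by rewrite /dot mulr_sumr; apply: eq_bigr => i _; rewrite !mxE mulrA. Qed.
Lemma dotBl (R : realType) n (u w v : 'rV[R]_n) : dot (u - w) v = dot u v - dot w v.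
Proof. by rewrite /dot -sumrB; apply: eq_bigr => i _; rewrite !mxE mulrBl. Qed.
Lemma dotDl (R : realType) n (u w v : 'rV[R]_n) : dot (u + w) v = dot u v + dot w v.
Proof. by rewrite /dot -big_split; apply: eq_bigr => i _; rewrite !mxE mulrDl. Qed.
Lemma dotC (R : realType) n (u v : 'rV[R]_n) : dot u v = dot v u.
Proof. by rewrite /dot; apply: eq_bigr => i _; rewrite mulrC. Qed.
Lemma dot_trmx (R : realType) p q (v : 'rV[R]_q) (A : 'M[R]_(p, q)) (y : 'rV[R]_p) :
  dot (v *m A^T) y = dot (y *m A) v.
Proof.
rewrite /dot.
under eq_bigr do rewrite !mxE mulr_suml.
rewrite exchange_big /=; apply: eq_bigr => j _; rewrite !mxE mulr_suml.
by apply: eq_bigr => i _; rewrite !mxE; ring.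
Qed.

Lemma dot_cvg (R : realType) p (F : set_system R) {FF : Filter F} (f : R -> 'rV[R]_p)
   (L y : 'rV[R]_p) : f @ F --> L -> (fun t => dot (f t) y) @ F --> dot L y.
Proof.
move=> fL; rewrite /dot.
apply: (@cvg_big R^o _ +%R 0 predT add_continuous) => // i _.
apply: cvgMr_tmp.
exact: (continuous_cvg _ (@coord_continuous R 1 p 0 i L)).
Qed.

Arguments dot_cvg {R p F FF f L} y _.

Lemma grad_ineq (R : realType) p q (h : 'rV[R]_q -> R) (gradh : 'rV[R]_q -> 'rV[R]_q)
  (H : 'rV[R]_q -> 'rV[R]_p) (Hj : 'rV[R]_q -> 'M[R]_(p, q)) x yv u :
  differentiable h x -> (forall v, 'd h x v = dot (gradh x) v) ->
  differentiable H x -> (forall v, 'd H x v = v *m (Hj x)^T) ->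
  convex_rfun (fun x => Phi h H x yv) ->
  Phi h H x yv + dot (gradxPhi gradh Hj x yv) (u - x) <= Phi h H u yv.
Proof.
move=> dh dhE dH dHE cvx.
set v := u - x.
have Hh : (fun t : R => t^-1 *: ((h \o shift x) (t *: v) - h x)) @ 0^' --> 'D_v h x.
  exact: diff_derivable.
have HH : (fun t : R => t^-1 *: ((H \o shift x) (t *: v) - H x)) @ 0^' --> 'D_v H x.
  exact: diff_derivable.
rewrite deriveE // dhE in Hh.
rewrite deriveE // dHE in HH.
have HHd : (fun t : R => dot (t^-1 *: ((H \o shift x) (t *: v) - H x)) yv) @ 0^' --> dot (v *m (Hj x)^T) yv.
  by apply: dot_cvg; exact: HH.
have Hq := cvgD Hh HHd.
have Hq' := cvg_dnbhs_at_right (Hq (dnbhs_filter _)).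
rewrite -lerBrDl.
have -> : dot (gradxPhi gradh Hj x yv) v = dot (gradh x) v + dot (v *m (Hj x)^T) yv.
  by rewrite /gradxPhi dotDl dot_trmx.
apply: (cvgr_to_le Hq').
near=> t.
have t0 : 0 < t by near: t; exact: nbhs_right_gt.
have t1 : t < 1 by near: t; exact: nbhs_right_lt.
have := cvx u x t; rewrite /= (ltW t0) (ltW t1) /= => /(_ isT).
have -> : t *: u + (1 - t) *: x = t *: v + x.
  by apply/rowP => i; rewrite /v !mxE; ring.
move=> c.
rewrite /= dotZl dotBl.
rewrite /Phi in c *.
set A := h (t *: v + x); set B := dot (H (t *: v + x)) yv.
have -> : t^-1 *: (A - h x) + t^-1 * (B - dot (H x) yv)
   = t^-1 * ((A + B) - (h x + dot (H x) yv)) by rewrite [_ *: _]/GRing.scale /=; ring.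
rewrite ler_pdivrMl //.
set P := h u + _ in c *; set Q := h x + _ in c *.
rewrite -/A -/B in c; lra.
Unshelve. all: by end_near.
Qed.
Lemma small_lemma (R : realType) (A B C : R) :
  (forall t, 0 < t -> t < 1 -> A <= B + t * C) -> A <= B.
Proof.
move=> H; rewrite leNgt; apply/negP => BA.
set e := A - B.
have e0 : 0 < e by rewrite subr_gt0.
set K := `|C| + e.
have K0 : 0 < K by rewrite ltr_wpDl.
set t := e / (2 * K).
have t0 : 0 < t by rewrite divr_gt0 // mulr_gt0.
have tK : t * K = e / 2 by rewrite /t; field; rewrite gt_eqF.
have t1 : t < 1.
  have : t * K < K.
    by rewrite tK; rewrite /K; have := normr_ge0 C; lra.
  by rewrite -ltr_pdivlMr // divff ?gt_eqF.
have := H t t0 t1.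
have : t * C <= t * K.
  rewrite ler_pM2l // /K; have := ler_norm C; lra.
rewrite tK /e; lra.
Qed.

Lemma sqn_ge0 (R : realType) n (u : 'rV[R]_n) : 0 <= sqn u.
Proof. by rewrite /sqn /dot; apply: sumr_ge0 => i _; rewrite -expr2 sqr_ge0. Qed.

Lemma sqn_le0 (R : realType) n (u : 'rV[R]_n) : sqn u <= 0 -> u = 0.
Proof.
move=> h.
have h0 : sqn u = 0 by apply/eqP; rewrite eq_le h sqn_ge0.
move: h0; rewrite /sqn /dot => /eqP; rewrite psumr_eq0; last first.
  by move=> i _; rewrite -expr2 sqr_ge0.
move=> /allP hall; apply/rowP => i; rewrite mxE.
have := hall i (mem_index_enum i); rewrite /= mulf_eq0 orbb => /eqP.
by [].
Qed.

Lemma prox_sub (R : realType) n (lam : R) (F : 'rV[R]_n -> \bar R) (u p : 'rV[R]_n) (fp : R) :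
  0 < lam -> convex_fun F -> (forall v, F v <> -oo%E) -> is_prox lam F u p -> F p = fp%:E ->
  forall v, (F p + (lam^-1 * dot (u - p) (v - p))%:E <= F v)%E.
Proof.
move=> lam0 cF nF hP Fp v.
case Fv: (F v) => [fv| |]; last (by have := nF v; rewrite Fv); last by rewrite leey.
rewrite Fp -EFinD lee_fin.
set d := dot (u - p) (v - p).
set sq := sqn (v - p).
apply: (@small_lemma R _ _ (sq / (2 * lam))) => t t0 t1.
set wt := t *: v + (1 - t) *: p.
have c := cF v p t; rewrite t0 t1 /= in c; have {}c := c isT.
rewrite Fv Fp -!EFinM -EFinD -/wt in c.
have pr := hP wt; rewrite Fp in pr.
have id : sqn (wt - u) = sqn (p - u) - 2 * t * d + t ^+ 2 * sq.
  rewrite /sqn /d /sq /dot /wt !mulr_sumr -!sumrN -!big_split /=.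
  by apply: eq_bigr => i _; rewrite !mxE; ring.
have : (fp + sqn (p - u) / (2 * lam) <= t * fv + (1 - t) * fp + sqn (wt - u) / (2 * lam)).
  rewrite -lee_fin EFinD.
  apply: (le_trans pr); rewrite EFinD.
  by apply: leeD2r.
rewrite id => h.
have h2 : t * (fp + lam^-1 * d) <= t * (fv + t * (sq / (2 * lam))).
  have -> : t * (fp + lam^-1 * d) = t * fp + (t * d) / lam by field; rewrite gt_eqF.
  have -> : t * (fv + t * (sq / (2 * lam))) = t * fv + (t ^+ 2 * sq) / (2 * lam).
    by field; rewrite gt_eqF.
  have e3 : (sqn (p - u) - 2 * t * d + t ^+ 2 * sq) / (2 * lam)
     = sqn (p - u) / (2 * lam) - (t * d) / lam + (t ^+ 2 * sq) / (2 * lam).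
    by field; rewrite gt_eqF.
  rewrite e3 in h.
  lra.
by rewrite ler_pM2l // in h2.
Qed.
Lemma moreau (R : realType) p (f : 'rV[R]_p -> \bar R) (sig : R) (y0 hx w yn : 'rV[R]_p) (fw : R) :
  0 < sig -> convex_fun f -> (forall v, f v <> -oo%E) ->
  is_prox sig^-1 f (sig^-1 *: y0 + hx) w -> f w = fw%:E ->
  is_prox sig (fconj f) (y0 + sig *: hx) yn ->
  yn = y0 + sig *: (hx - w) /\ (fconj f yn < +oo)%E
  /\ forall v, (f w + (dot yn (v - w))%:E <= f v)%E.
Proof.
move=> sig0 cf nf pw fwE pyn.
set yh := y0 + sig *: (hx - w).
have si0 : 0 < sig^-1 by rewrite invr_gt0.
have sub := @prox_sub R p sig^-1 f _ w fw si0 cf nf pw fwE.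
have subh : forall v, (f w + (dot yh (v - w))%:E <= f v)%E.
  move=> v; have := sub v; rewrite invrK -dotZl.
  suff -> : sig *: (sig^-1 *: y0 + hx - w) = yh by [].
  by apply/rowP => i; rewrite /yh !mxE; field; rewrite gt_eqF.
have up : (fconj f yh <= (dot w yh - fw)%:E)%E.
  apply: ub_ereal_sup => _ [u _ <-].
  case Fu: (f u) => [fu| |]; last by have := nf u; rewrite Fu.
  - have := subh u; rewrite Fu fwE -EFinD -EFinB !lee_fin dotC dotBl [dot w yh]dotC.
    lra.
  - by rewrite /= leNye.
have low : forall v, ((dot w v - fw)%:E <= fconj f v)%E.
  by move=> v; apply: ereal_sup_ubound; exists w => //; rewrite fwE -EFinB.
have pr := pyn yh.
have comb : ((dot w yn - fw + sqn (yn - (y0 + sig *: hx)) / (2 * sig))%:E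
             <= (dot w yh - fw + sqn (yh - (y0 + sig *: hx)) / (2 * sig))%:E)%E.
  rewrite !EFinD.
  apply: (le_trans _ (le_trans pr _)).
    by rewrite -EFinD; apply: leeD2r; rewrite EFinB; apply: low.
  by rewrite -EFinB; apply: leeD2r.
rewrite lee_fin in comb.
have id : sqn (yn - yh) = sqn (yn - (y0 + sig *: hx)) - sqn (yh - (y0 + sig *: hx))
                          + 2 * sig * (dot w yn - dot w yh).
  rewrite /sqn /dot /yh -!sumrB !mulr_sumr -!big_split /=.
  by apply: eq_bigr => i _; rewrite !mxE; ring.
have e : yn = yh.
  apply/eqP; rewrite -subr_eq0; apply/eqP; apply: sqn_le0.
  rewrite id.
  have : (sqn (yn - (y0 + sig *: hx)) - sqn (yh - (y0 + sig *: hx))) / (2 * sig)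
          <= dot w yh - dot w yn by lra.
  rewrite ler_pdivrMr ?mulr_gt0 //.
  nra.
split => //; rewrite e; split => //.
exact: (le_lt_trans up (ltry _)).
Qed.

Lemma yineq (R : realType) p (Y0 Y1 Y HX W WS : 'rV[R]_p) (tau beta : R) :
  0 < beta -> Y1 = Y0 + (beta * tau) *: (HX - W) ->
  2 * tau * (dot WS Y1 - dot HX Y1) - 2 * tau * dot Y1 (WS - W)
   + 2 * tau * dot Y (HX - W) + beta^-1 * sqn (Y1 - Y) + beta^-1 * sqn (Y1 - Y0)
  <= beta^-1 * sqn (Y0 - Y).
Proof.
move=> b0 hY1; rewrite hY1 /sqn /dot -!sumrB !mulr_sumr -!sumrN -!big_split /=.
apply: ler_sum => i _; rewrite !mxE.
rewrite le_eqVlt; apply/orP; left; apply/eqP; field.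
by rewrite gt_eqF.
Qed.

Lemma prox_dom (R : realType) n (lam : R) (F : 'rV[R]_n -> \bar R) (u p : 'rV[R]_n) :
  is_prox lam F u p -> (forall v, F v <> -oo%E) -> (exists v, (F v < +oo)%E) -> (F p < +oo)%E.
Proof.
move=> hp nF [v Fv]; have := hp v.
case Fp: (F p) => [r| |].
- by move=> _; exact: ltry.
- case Fv': (F v) => [fv| |].
  + by rewrite /= leye_eq.
  + by rewrite Fv' in Fv.
  + by have := nF v; rewrite Fv'.
- by have := nF p; rewrite Fp.
Qed.

Lemma finE (R : realType) (e : \bar R) : e <> -oo%E -> (e < +oo)%E -> e = (fine e)%:E.
Proof. by case: e => //= _ ; rewrite ltxx. Qed.

Lemma dotBr (R : realType) n (u w v : 'rV[R]_n) : dot v (u - w) = dot v u - dot v w.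
Proof. by rewrite dotC dotBl (dotC _ _ u) (dotC _ _ w). Qed.

Lemma scale_ineq (R : realType) (a b c t D : R) :
  0 < t -> 0 < D -> a + t^-1 * b <= c -> 2 * (D * t) * a + 2 * D * b <= 2 * (D * t) * c.
Proof.
move=> t0 D0 h.
have := ler_wpM2l (_ : 0 <= 2 * (D * t)) h; rewrite mulrDr.
have -> : 2 * (D * t) * (t^-1 * b) = 2 * D * b by field; rewrite gt_eqF.
apply; rewrite mulr_ge0 // mulr_ge0 // ltW //.
Qed.

Lemma Phiy0 (R : realType) p q (h : 'rV[R]_q -> R) (H : 'rV[R]_q -> 'rV[R]_p) x yo yn :
  Phiy h H x yo yn = 0.
Proof. rewrite /Phiy /Phi /gradyPhi dotBr; ring. Qed.

Theorem lemma4p2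
  (R : realType) (p q : nat)
  (* f on R^p and g on R^q: proper closed convex *)
  (f : 'rV[R]_p -> \bar R) (g : 'rV[R]_q -> \bar R)
  (f_proper : proper_fun f) (f_closed : closed_fun f) (f_convex : convex_fun f)
  (g_proper : proper_fun g) (g_closed : closed_fun g) (g_convex : convex_fun g)
  (* h convex with L_h-Lipschitz gradient *)
  (h : 'rV[R]_q -> R) (gradh : 'rV[R]_q -> 'rV[R]_q) (Lh : R)
  (h_convex : convex_rfun h)
  (h_diff : forall x : 'rV[R]_q,
      differentiable h x /\ forall v : 'rV[R]_q, 'd h x v = dot (gradh x) v)
  (Lh_ge0 : 0 <= Lh)
  (h_lip : forall x x' : 'rV[R]_q, enorm (gradh x - gradh x') <= Lh * enorm (x - x'))
  (* H : dom g -> dom f, continuously differentiable with Jacobian Hj *)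
  (H : 'rV[R]_q -> 'rV[R]_p) (Hj : 'rV[R]_q -> 'M[R]_(p, q))
  (H_dom : forall x, edom g x -> edom f (H x))
  (H_diff : forall x : 'rV[R]_q, edom g x ->
      differentiable H x /\ forall v : 'rV[R]_q, 'd H x v = v *m (Hj x)^T)
  (Hj_cont : forall x : 'rV[R]_q, edom g x -> Hj @ within (edom g) (nbhs x) --> Hj x)
  (H_convex : forall yv, edom (fconj f) yv -> convex_rfun (fun x => dot (H x) yv))
  (* (A1) *)
  (A1 : exists (xs0 : 'rV[R]_q) (ys0 : 'rV[R]_p),
      edom g xs0 /\ edom (fconj f) ys0
      /\ subdiff g xs0 (- gradxPhi gradh Hj xs0 ys0)
      /\ subdiff (fconj f) ys0 (gradyPhi H xs0 ys0)
      /\ ((g xs0 + (Phi h H xs0 ys0)%:E - fconj f ys0)%E \is a fin_num))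
  (* (A2) *)
  (A2_convex : forall yv, edom (fconj f) yv -> convex_rfun (fun x => Phi h H x yv))
  (A2_concave : forall x, concave_rfun (fun yv => Phi h H x yv))
  (A2_lip : forall (X : set 'rV[R]_q) (Y : set 'rV[R]_p), ebounded X -> ebounded Y ->
      exists Lyy Lxx Lxy : R, 0 <= Lyy /\ 0 <= Lxx /\ 0 < Lxy
      /\ (forall x yv yv', X x -> edom g x -> Y yv -> edom (fconj f) yv ->
            Y yv' -> edom (fconj f) yv' ->
            enorm (gradyPhi H x yv - gradyPhi H x yv') <= Lyy * enorm (yv - yv'))
      /\ (forall x x' yv yv', X x -> edom g x -> X x' -> edom g x' ->
            Y yv -> edom (fconj f) yv -> Y yv' -> edom (fconj f) yv' ->
            enorm (gradxPhi gradh Hj x yv - gradxPhi gradh Hj x' yv')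
              <= Lxx * enorm (x - x') + Lxy * enorm (yv - yv')))
  (* fixed point (xs, ws, ys) of Omega~ *)
  (xs : 'rV[R]_q) (ws ys : 'rV[R]_p)
  (fixpt : edom g xs /\ edom f ws /\ edom (fconj f) ys
      /\ subdiff g xs (- (ys *m Hj xs) - gradh xs)
      /\ subdiff f ws ys /\ H xs = ws)
  (* parameters of PDAc-L *)
  (psi xi phi taumax nu mu eta beta : R) (M : nat)
  (psi_range : 1 < psi < 1 + Num.sqrt 3) (xi_gt0 : 0 < xi) (phi_gt1 : 1 < phi)
  (omega_gt0 : 0 < omega psi xi phi) (taumax_gt0 : 0 < taumax)
  (nu_range : 0 < nu < 1) (mu_range : 0 < mu < 1) (eta_range : 0 <= eta < 1)
  (M_ge1 : (1 <= M)%N) (beta_gt0 : 0 < beta)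
  (* iterates of PDAc-L *)
  (x z : nat -> 'rV[R]_q) (y w : nat -> 'rV[R]_p) (tau : nat -> R)
  (x0_dom : edom g (x 0)) (y0_dom : edom (fconj f) (y 0))
  (tau0_range : 0 < tau 0 <= taumax) (z0_def : z 0 = x 0)
  (z_def : forall n, (1 <= n)%N ->
      z n = ((psi - 1) / psi) *: x n.-1 + psi^-1 *: z n.-1)
  (x_def : forall n, (1 <= n)%N ->
      is_prox (tau n.-1) g (z n - tau n.-1 *: gradxPhi gradh Hj (x n.-1) (y n.-1)) (x n))
  (linesearch : forall n, (1 <= n)%N ->
      exists i : nat,
        tau n = Num.min (phi * tau n.-1) taumax * mu ^+ i
        /\ is_prox (beta * tau n) (fconj f) (y n.-1 + (beta * tau n) *: H (x n)) (y n)
        /\ ls_cond h gradh H Hj (omega psi xi phi) xi nu beta eta M tau x y n (tau n) (y n)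
        /\ (forall j : nat, (j < i)%N -> forall yc : 'rV[R]_p,
              is_prox (beta * (Num.min (phi * tau n.-1) taumax * mu ^+ j)) (fconj f)
                (y n.-1 + (beta * (Num.min (phi * tau n.-1) taumax * mu ^+ j)) *: H (x n)) yc ->
              ~ ls_cond h gradh H Hj (omega psi xi phi) xi nu beta eta M tau x y n
                  (Num.min (phi * tau n.-1) taumax * mu ^+ j) yc))
  (w_def : forall n, (1 <= n)%N ->
      is_prox (beta * tau n)^-1 f ((beta * tau n)^-1 *: y n.-1 + H (x n)) (w n)) :
  forall (yv : 'rV[R]_p) (n : nat), (1 <= n)%N ->
    ((atil psi (omega psi xi phi) beta tau x z y xs n.+1 yv)%:E
       + (2 * tau n)%:E * Jtil f g h H xs ws (x n) (w n) yv
     <= (atil psi (omega psi xi phi) beta tau x z y xs n yv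
         - bn_seq h gradh H Hj (omega psi xi phi) xi beta tau x y n)%:E)%E.

Proof.
move=> yv n n1.
case: n n1 => [//|n'] _; set n := n'.+1.
have taupos : forall k, 0 < tau k.
  elim => [|k IH]; first by case/andP: tau0_range.
  have [i [-> _]] := linesearch k.+1 isT.
  apply: mulr_gt0; last by rewrite exprn_gt0 //; case/andP: mu_range.
  by rewrite lt_min taumax_gt0 andbT mulr_gt0 // (lt_trans ltr01 phi_gt1).
have tle : tau n <= phi * tau n.-1.
  have [i [-> _]] := linesearch n isT.
  apply: (@le_trans _ _ (Num.min (phi * tau n.-1) taumax)).
    apply: ler_piMr.
      by rewrite le_min !ltW ?taumax_gt0 // mulr_gt0 // ?taupos // (lt_trans ltr01 phi_gt1).
    by case/andP: mu_range => m0 m1; apply: exprn_ile1; apply: ltW.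
  by rewrite ge_min lexx.
set tn := tau n; set tp := tau n.-1.
have tn0 : 0 < tn := taupos n.
have tp0 : 0 < tp := taupos n.-1.
set D := tn / tp.
have DE : D * tp = tn by rewrite /D divfK // gt_eqF.
have D0 : 0 < D by rewrite divr_gt0.
have Dph : D <= phi by rewrite /D ler_pdivrMr // mulrC.
have deltan : delta tau n = D by [].
case: g_proper => gnN gex.
case: f_proper => fnN fex.
have gX0 : (g (x n) < +oo)%E := @prox_dom _ _ _ _ _ _ (x_def n isT) gnN gex.
have gX1 : (g (x n.+1) < +oo)%E := @prox_dom _ _ _ _ _ _ (x_def n.+1 isT) gnN gex.
have fW : (f (w n) < +oo)%E := @prox_dom _ _ _ _ _ _ (w_def n isT) fnN fex.
case: fixpt => gxs [fws [fcys [_ [_ Hxs]]]].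
have g0E := @finE _ _ (gnN _) gX0; set g0 := fine (g (x n)) in g0E.
have g1E := @finE _ _ (gnN _) gX1; set g1 := fine (g (x n.+1)) in g1E.
have gsE := @finE _ _ (gnN _) gxs; set gs := fine (g xs) in gsE.
have fwE := @finE _ _ (fnN _) fW; set fw := fine (f (w n)) in fwE.
have fsE := @finE _ _ (fnN _) fws; set fs := fine (f ws) in fsE.
have [i [_ [py _]]] := linesearch n isT.
have bt0 : 0 < beta * tn by rewrite mulr_gt0.
have [Y1E [fcY1 subf]] := @moreau R p f (beta * tn) (y n.-1) (H (x n)) (w n) (y n) fw
   bt0 f_convex fnN (w_def n isT) fwE py.
have F4 : fw + dot (y n) (ws - w n) <= fs.
  by have := subf ws; rewrite fwE fsE -EFinD lee_fin.
set N1 := gradxPhi gradh Hj (x n) (y n).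
set N0 := gradxPhi gradh Hj (x n.-1) (y n.-1).
have F1 := @prox_sub R q tn g _ (x n.+1) g1 tn0 g_convex gnN (x_def n.+1 isT) g1E xs.
rewrite g1E gsE -EFinD lee_fin in F1.
have F2 := @prox_sub R q tp g _ (x n) g0 tp0 g_convex gnN (x_def n isT) g0E (x n.+1).
rewrite g0E g1E -EFinD lee_fin in F2.
have F3 := @grad_ineq R p q h gradh H Hj (x n) (y n) xs (h_diff _).1 (h_diff _).2
   (H_diff _ gX0).1 (H_diff _ gX0).2 (A2_convex _ fcY1).
have [ps1 _] := andP psi_range.
have hZ := z_def n.+1 isT.
have hZ2 := z_def n.+2 isT.
have XI := @xineq R q (x n.+1) (x n) (z n) (z n.+1) (z n.+2) xs N1 N0 psi D tp xi phi
   ps1 D0 Dph xi_gt0 tp0 hZ hZ2.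
have YI := @yineq R p (y n.-1) (y n) yv (H (x n)) (w n) ws tn beta beta_gt0 Y1E.
have F1' : g1 + tn^-1 * dot (z n.+1 - tn *: N1 - x n.+1) (xs - x n.+1) <= gs := F1.
have F2' : g0 + tp^-1 * dot (z n - tp *: N0 - x n) (x n.+1 - x n) <= g1 := F2.
have E1 : dot (z n.+1 - tn *: N1 - x n.+1) (xs - x n.+1)
   = - dot (x n.+1 - z n.+1 + (D * tp) *: N1) (xs - x n.+1).
  by rewrite DE /dot -sumrN; apply: eq_bigr => k _; rewrite !mxE; ring.
have E2 : dot (z n - tp *: N0 - x n) (x n.+1 - x n)
   = - dot (x n - z n + tp *: N0) (x n.+1 - x n).
  by rewrite /dot -sumrN; apply: eq_bigr => k _; rewrite !mxE; ring.
rewrite E1 in F1'; rewrite E2 in F2'.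
have F1s := @scale_ineq R _ _ _ tn 1 tn0 ltr01 F1'.
have F2s := @scale_ineq R _ _ _ tp D tp0 D0 F2'.
rewrite !mul1r in F1s.
rewrite DE in F2s XI.
have F3s := ler_wpM2l (_ : 0 <= 2 * tn) F3.
rewrite /Phi Hxs -/N1 in F3s.
have F4s := ler_wpM2l (_ : 0 <= 2 * tn) F4.
rewrite /Jtil /Fobj g0E gsE fwE fsE.
rewrite -!EFinD lee_fin.
rewrite /atil /bn_seq Phiy0 deltan.
have t2 : 0 <= 2 * tn by rewrite mulr_ge0 // ltW.
have {}F3s := F3s t2; have {}F4s := F4s t2.
rewrite (_ : n.+1.-1 = n) // -/tn -/tp -/N1 -/N0 DE in F1s *.
set c1 := psi / (psi - 1) in XI *.
set bi := beta^-1 in YI *.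
set c3 := tn * tp / xi in XI *.
lra.
Qed.
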